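(* Consider two user types $k\in\{1,2\}$ (write $-k$ for the other type), with $N_k$ users of type $k$, individual arrival rate $\lambda_k$, departure rate $\mu_k$, and instantaneous utility of use $u_k(\tau)=\alpha_k-\beta_k/\tau$ ($\alpha_k,\beta_k>0$). Suppose the service provider uses CSMA with transmission probability $p\in(0,1)$, has no admission control (every arriving user is admitted), and offers the pricing policy $\mathbf P=(\phi,(p_s,0))$. Let $a_j=\lambda_j/(\lambda_j+\mu_j)$ and $x_j(\pi_{j,1})=\pi_{j,1}\,a_j\,\frac{p}{1-p}+1$ for $j=1,2$. When the other users play according to the profile $\pi=(\pi_1,\pi_2)$, $\pi_j=[\pi_{j,0},\pi_{j,1}]$, the expected utility of use and expected cost of a particular type-$k$ user playing $\pi_k'=[\pi_{k,0}',\pi_{k,1}']$ are $$U_k(\theta,\alpha,(\pi;\pi_k'))=\pi_{k,1}'\,\Delta T\,a_k\Big[\alpha_k-\frac{\beta_k}{p}\big(x_k(\pi_{k,1})\big)^{N_k-1}\big(x_{-k}(\pi_{-k,1})\big)^{N_{-k}}\Big]$$ and $C_k(\theta,\alpha,\mathbf P,(\pi;\pi_k'))=\pi_{k,1}'\,p_s$.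
   Context: Plan $0$ is the dummy plan $\phi$ (no subscription); plan $1$ charges subscription fee $p_s\ge0$ per billing period of length $\Delta T$ and zero per-unit charge. Each type-$k$ user independently chooses plan $1$ with probability $\pi_{k,1}$ (the particular user with probability $\pi_{k,1}'$), fixed thereafter; the realization gives $n_{k,1}$ type-$k$ users on plan $1$. Each plan-1 user alternates: while offline it arrives at the network after an exponential time of rate $\lambda_k$, and while online it departs after an exponential time of rate $\mu_k$, independently; $\mathbf X(\infty)$ denotes the steady-state system state, $x_{k,1}$ the number of online type-$k$ plan-1 users. Under the CSMA protocol (equivalent to slotted ALOHA with transmission probability $p$, normalized bandwidth $1$) an online user's throughput when $X=x_{1,1}+x_{2,1}$ users are online is $\tau(\mathbf x)=p(1-p)^{X-1}$. Definitions: $V_k^1(\mathbf n)=\Delta T\sum_{\mathbf x}\Pr(\mathbf X(\infty)=\mathbf x)\frac{x_{k,1}}{n_{k,1}}u_k(\tau(\mathbf x))$; $U_k(\theta,\alpha,(\pi;\pi_k'))=\pi_{k,1}'\sum_{\mathbf n:n_{k,1}\ge1}\Pr(\mathbf n\mid k,1)V_k^1(\mathbf n)$, where $\Pr(\mathbf n\mid k,1)$ is the probability of the realization $\mathbf n$ given that the particular user chose plan $1$ (other users choosing independently according to $\pi$); $C_k(\theta,\alpha,\mathbf P,(\pi;\pi_k'))=\pi_{k,1}'\big(p_s+\sum_{\mathbf n}\Pr(\mathbf n\mid k,1)\cdot 0\cdot B_k^1(\mathbf n)\big)$. *)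

(* Defs.v *)
(* User types: k : bool, with true = type 1, false = type 2;
   the "other type" -k is ~~ k. *)
From mathcomp Require Import all_boot all_order all_algebra.
Set Implicit Arguments. Unset Strict Implicit. Unset Printing Implicit Defensive.
Import Order.TTheory GRing.Theory Num.Theory.
Local Open Scope ring_scope.

Definition sel {T : Type} (k : bool) (a b : T) : T := if k then a else b.

(* Steady-state (stationary) distribution of the system state
   (x_{1,1}, x_{2,1}) when n1 type-1 and n2 type-2 users are on plan 1 and
   there is no admission control: each offline user arrives at rate lam j,
   each online user departs at rate mu j. *)
Definition is_stationary (R : realFieldType) (lam mu : bool -> R)
    (n1 n2 : nat) (P : nat -> nat -> R) : Prop :=
  [/\ (forall x1 x2, (x1 <= n1)%N -> (x2 <= n2)%N -> 0 <= P x1 x2),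
      \sum_(x1 < n1.+1) \sum_(x2 < n2.+1) P x1 x2 = 1 &
      (forall x1 x2, (x1 <= n1)%N -> (x2 <= n2)%N ->
        P x1 x2 * ((n1 - x1)%:R * lam true + x1%:R * mu true
                   + (n2 - x2)%:R * lam false + x2%:R * mu false)
        = (if (0 < x1)%N then P x1.-1 x2 * (n1 - x1.-1)%:R * lam true else 0)
        + (if (x1 < n1)%N then P x1.+1 x2 * x1.+1%:R * mu true else 0)
        + (if (0 < x2)%N then P x1 x2.-1 * (n2 - x2.-1)%:R * lam false else 0)
        + (if (x2 < n2)%N then P x1 x2.+1 * x2.+1%:R * mu false else 0))].

(* CSMA (slotted ALOHA) per-user throughput with X = x1 + x2 online users *)
Definition tau (R : realFieldType) (p : R) (x1 x2 : nat) : R :=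
  p * (1 - p) ^ ((x1 + x2)%N%:Z - 1).

Definition util (R : realFieldType) (alpha beta : bool -> R) (k : bool) (t : R) : R :=
  alpha k - beta k / t.

Definition Vk1 (R : realFieldType) (alpha beta : bool -> R) (p dT : R) (k : bool)
    (n1 n2 : nat) (P : nat -> nat -> R) : R :=
  dT * \sum_(x1 < n1.+1) \sum_(x2 < n2.+1)
         P x1 x2 * ((sel k (x1 : nat) (x2 : nat))%:R / (sel k n1 n2)%:R)
                 * util alpha beta k (tau p x1 x2).

Definition binpmf (R : realFieldType) (m : nat) (q : R) (j : nat) : R :=
  'C(m, j)%:R * q ^+ j * (1 - q) ^+ (m - j).

(* Pr(n | k, 1): the particular type-k user is on plan 1, the other N_k - 1
   type-k users and the N_{-k} type-(-k) users choose plan 1 independently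
   with probabilities pi k, pi (~~ k). *)
Definition prob_cond (R : realFieldType) (N : bool -> nat) (pi : bool -> R)
    (k : bool) (n1 n2 : nat) : R :=
  let nk := sel k n1 n2 in let no := sel k n2 n1 in
  if (0 < nk)%N then binpmf (N k).-1 (pi k) nk.-1 * binpmf (N (~~ k)) (pi (~~ k)) no
  else 0.

(* U_k(theta, alpha, (pi; pi'_k)); SD n1 n2 is the steady-state distribution
   for the realization n = (n1, n2) *)
Definition Uk (R : realFieldType) (N : bool -> nat) (alpha beta : bool -> R)
    (p dT : R) (pi : bool -> R) (k : bool) (pi' : R)
    (SD : nat -> nat -> nat -> nat -> R) : R :=
  pi' * \sum_(n1 < (N true).+1) \sum_(n2 < (N false).+1 | (0 < sel k (n1 : nat) (n2 : nat))%N)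
          prob_cond N pi k n1 n2 * Vk1 alpha beta p dT k n1 n2 (SD n1 n2).

(* C_k(theta, alpha, P, (pi; pi'_k)) with per-unit charge 0 and usage B_k^1 *)
Definition Ck (R : realFieldType) (N : bool -> nat) (pi : bool -> R) (k : bool)
    (pi' ps : R) (B : nat -> nat -> R) : R :=
  pi' * (ps + \sum_(n1 < (N true).+1) \sum_(n2 < (N false).+1)
                 prob_cond N pi k n1 n2 * 0 * B n1 n2).

Definition aa (R : realFieldType) (lam mu : bool -> R) (j : bool) : R :=
  lam j / (lam j + mu j).

Definition xx (R : realFieldType) (lam mu : bool -> R) (p : R) (j : bool) (q : R) : R :=
  q * aa lam mu j * (p / (1 - p)) + 1.

(* Main.v *)
Require Import Defs.
From mathcomp Require Import all_boot all_order all_algebra.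
From mathcomp Require Import ring lra.
Import Order.TTheory GRing.Theory Num.Theory.
Local Open Scope ring_scope.
Set Implicit Arguments.
Unset Strict Implicit.

Lemma exists_max (R : realFieldType) (T : finType) (x0 : T) (F : T -> R) :
  exists i, forall j, F j <= F i.
Proof.
case: (@arg_maxP _ R T x0 xpredT F erefl) => i _ H.
by exists i => j; apply: H.
Qed.

Lemma binpmf_gen (R : realFieldType) (n : nat) (q c : R) :
  \sum_(j < n.+1) binpmf n q j * c ^+ j = (q * c + (1 - q)) ^+ n.
Proof.
rewrite addrC exprDn; apply: eq_bigr => i _.
rewrite /binpmf -mulr_natl exprMn; ring.
Qed.

Lemma binpmf_gen1 (R : realFieldType) (n : nat) (q c : R) :
  \sum_(j < n.+1) binpmf n q j * j%:R * c ^+ j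
   = n%:R * q * c * (q * c + (1 - q)) ^+ n.-1.
Proof.
case: n => [|m]; first by rewrite big_ord1 /= !mulr0 !mul0r.
rewrite big_ord_recl /= mulr0 mul0r add0r -binpmf_gen mulr_sumr.
apply: eq_bigr => i _; rewrite /binpmf /bump /= add1n subSS.
have H := mul_bin_diag m.+1 i; simpl in H.
have HC : ('C(m.+1, i.+1)%:R : R) * i.+1%:R = m.+1%:R * 'C(m, i)%:R.
  by rewrite -!natrM mulnC -H.
rewrite !exprS.
transitivity (('C(m.+1, i.+1)%:R * i.+1%:R) * q ^+ i * (1 - q) ^+ (m - i) * c ^+ i * q * c); first ring.
rewrite HC; ring.
Qed.

Lemma binpmf_sum (R : realFieldType) (n : nat) (q : R) :
  \sum_(j < n.+1) binpmf n q j = 1.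
Proof.
have := @binpmf_gen _ n q 1; rewrite mulr1 addrC subrK expr1n => <-.
by apply: eq_bigr => i _; rewrite expr1n mulr1.
Qed.

Lemma binpmf_gt0 (R : realFieldType) (n x : nat) (q : R) :
  0 < q -> q < 1 -> (x <= n)%N -> 0 < binpmf n q x.
Proof.
move=> q0 q1 xn; rewrite /binpmf; apply: mulr_gt0; first apply: mulr_gt0.
- by rewrite ltr0n bin_gt0.
- exact: exprn_gt0.
- by apply: exprn_gt0; rewrite subr_gt0.
Qed.

Lemma detbal (R : realFieldType) (n y : nat) (l m : R) :
  0 < l -> 0 < m -> (y < n)%N ->
  binpmf n (l / (l + m)) y * (n - y)%:R * l
  = binpmf n (l / (l + m)) y.+1 * y.+1%:R * m.
Proof.
move=> l0 m0 yn.
have lm : l + m != 0 by rewrite gt_eqF // addr_gt0.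
have e : (1 - l / (l + m)) = m / (l + m) by field; rewrite lm.
have H := mul_bin_left n y.
have -> : (n - y = (n - y.+1).+1)%N by rewrite subnSK.
rewrite /binpmf.
have -> : (n - y = (n - y.+1).+1)%N by rewrite subnSK.
have HC : ('C(n, y)%:R : R) * (n - y.+1).+1%:R = 'C(n, y.+1)%:R * y.+1%:R.
  by rewrite -!natrM subnSK // mulnC -H mulnC.
rewrite e !exprS.
set A := (l / (l+m)) ^+ y. set B := (m / (l+m)) ^+ (n - y.+1).
set C1 := ('C(n, y)%:R : R). set C2 := ('C(n, y.+1)%:R : R).
set K := (n - y.+1).+1%:R.
transitivity (C1 * K * A * B * (m / (l+m)) * l); first ring.
rewrite HC; field; exact: lm.
Qed.

Lemma prop1 (Q : nat -> Prop) (n a : nat) : (a <= n)%N -> Q a ->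
  (forall x, (x <= n)%N -> Q x -> ((0 < x)%N -> Q x.-1) /\ ((x < n)%N -> Q x.+1)) ->
  forall x, (x <= n)%N -> Q x.
Proof.
move=> an Qa step.
have H0 : forall d, (d <= a)%N -> Q (a - d)%N.
  elim => [|d IH] Hd; first by rewrite subn0.
  have Qd := IH (ltnW Hd).
  have := (step (a - d)%N (leq_trans (leq_subr _ _) an) Qd).1.
  by rewrite subn_gt0 subnS => /(_ Hd).
have Q0 : Q 0%N by have := H0 a (leqnn a); rewrite subnn.
elim => [|x IH] // Hx.
exact: ((step x (ltnW Hx) (IH (ltnW Hx))).2 Hx).
Qed.

Lemma sum4_0 (R : realFieldType) (a b c d : R) : 0 <= a -> 0 <= b -> 0 <= c -> 0 <= d ->
  a + b + c + d = 0 -> [/\ a = 0, b = 0, c = 0 & d = 0].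
Proof. move=> *; split; lra. Qed.

Lemma aa_bounds (R : realFieldType) (lam mu : bool -> R) j :
  0 < lam j -> 0 < mu j -> 0 < aa lam mu j /\ aa lam mu j < 1.
Proof.
move=> l0 m0; rewrite /aa; have lm : 0 < lam j + mu j by rewrite addr_gt0.
split; first exact: divr_gt0.
by rewrite ltr_pdivrMr // mul1r ltrDl.
Qed.

Lemma stat_unique (R : realFieldType) (lam mu : bool -> R) n1 n2 P :
  (forall j, 0 < lam j) -> (forall j, 0 < mu j) ->
  is_stationary lam mu n1 n2 P ->
  forall x1 x2, (x1 <= n1)%N -> (x2 <= n2)%N ->
  P x1 x2 = binpmf n1 (aa lam mu true) x1 * binpmf n2 (aa lam mu false) x2.
Proof.
move=> hl hm [_ Hsum Hbal].
have [a10 a11] := @aa_bounds _ lam mu true (hl true) (hm true).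
have [a20 a21] := @aa_bounds _ lam mu false (hl false) (hm false).
set a1 := aa lam mu true in a10 a11 *; set a2 := aa lam mu false in a20 a21 *.
pose pi x1 x2 := binpmf n1 a1 x1 * binpmf n2 a2 x2.
have pipos : forall x1 x2, (x1 <= n1)%N -> (x2 <= n2)%N -> 0 < pi x1 x2.
  by move=> x1 x2 h1 h2; apply: mulr_gt0; apply: binpmf_gt0.
pose D x1 x2 := P x1 x2 / pi x1 x2.
have PD : forall x1 x2, (x1 <= n1)%N -> (x2 <= n2)%N -> P x1 x2 = D x1 x2 * pi x1 x2.
  move=> x1 x2 h1 h2; rewrite /D mulfVK //; exact: lt0r_neq0 (pipos _ _ h1 h2).
have [[i1 i2] Hmax] := exists_max (ord0 : 'I_n1.+1, ord0 : 'I_n2.+1)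
   (fun ij => D (ij.1 : nat) (ij.2 : nat)).
set M := D i1 i2 in Hmax.
have Hle : forall x1 x2, (x1 <= n1)%N -> (x2 <= n2)%N -> D x1 x2 <= M.
  move=> x1 x2 h1 h2.
  have := Hmax (inord x1, inord x2); rewrite /= !inordK //.
have db1 : forall y, (y < n1)%N -> binpmf n1 a1 y * (n1 - y)%:R * lam true
          = binpmf n1 a1 y.+1 * y.+1%:R * mu true by move=> y hy; exact: detbal.
have db2 : forall y, (y < n2)%N -> binpmf n2 a2 y * (n2 - y)%:R * lam false
          = binpmf n2 a2 y.+1 * y.+1%:R * mu false by move=> y hy; exact: detbal.
have step : forall x1 x2, (x1 <= n1)%N -> (x2 <= n2)%N -> D x1 x2 = M ->
   [/\ (0 < x1)%N -> D x1.-1 x2 = M, (x1 < n1)%N -> D x1.+1 x2 = M,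
       (0 < x2)%N -> D x1 x2.-1 = M & (x2 < n2)%N -> D x1 x2.+1 = M].
  move=> x1 x2 h1 h2 DM.
  have pp := pipos _ _ h1 h2.
  have t1 : (if (0 < x1)%N then P x1.-1 x2 * (n1 - x1.-1)%:R * lam true else 0)
            = pi x1 x2 * (x1%:R * mu true) * (if (0 < x1)%N then D x1.-1 x2 else M).
    case: x1 h1 {DM pp} => [|y] h1 /=; first by rewrite ?natr0 !mul0r !mulr0 ?mul0r.
    rewrite PD ?(ltnW h1) // /pi.
    transitivity (D y x2 * binpmf n2 a2 x2 * (binpmf n1 a1 y * (n1 - y)%:R * lam true));
      first ring.
    rewrite db1 //; ring.
  have t2 : (if (x1 < n1)%N then P x1.+1 x2 * x1.+1%:R * mu true else 0)
            = pi x1 x2 * ((n1 - x1)%:R * lam true) * (if (x1 < n1)%N then D x1.+1 x2 else M).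
    case: ltnP => h; last first.
      by rewrite (_ : x1 = n1) ?subnn ?natr0 ?mul0r ?mulr0 ?mul0r //; apply/eqP; rewrite eqn_leq h1 h.
    rewrite PD // /pi.
    transitivity (D x1.+1 x2 * binpmf n2 a2 x2 * (binpmf n1 a1 x1.+1 * x1.+1%:R * mu true));
      first ring.
    rewrite -db1 //; ring.
  have t3 : (if (0 < x2)%N then P x1 x2.-1 * (n2 - x2.-1)%:R * lam false else 0)
            = pi x1 x2 * (x2%:R * mu false) * (if (0 < x2)%N then D x1 x2.-1 else M).
    case: x2 h2 {DM pp t1 t2} => [|y] h2 /=; first by rewrite ?natr0 !mul0r !mulr0 ?mul0r.
    rewrite PD ?(ltnW h2) // /pi.
    transitivity (D x1 y * binpmf n1 a1 x1 * (binpmf n2 a2 y * (n2 - y)%:R * lam false));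
      first ring.
    rewrite db2 //; ring.
  have t4 : (if (x2 < n2)%N then P x1 x2.+1 * x2.+1%:R * mu false else 0)
            = pi x1 x2 * ((n2 - x2)%:R * lam false) * (if (x2 < n2)%N then D x1 x2.+1 else M).
    case: ltnP => h; last first.
      by rewrite (_ : x2 = n2) ?subnn ?natr0 ?mul0r ?mulr0 ?mul0r //; apply/eqP; rewrite eqn_leq h2 h.
    rewrite PD // /pi.
    transitivity (D x1 x2.+1 * binpmf n1 a1 x1 * (binpmf n2 a2 x2.+1 * x2.+1%:R * mu false));
      first ring.
    rewrite -db2 //; ring.
  have := Hbal x1 x2 h1 h2; rewrite t1 t2 t3 t4 PD // DM.
  set d1 := (if (0 < x1)%N then _ else _). set d2 := (if (x1 < n1)%N then _ else _).
  set d3 := (if (0 < x2)%N then _ else _). set d4 := (if (x2 < n2)%N then _ else _).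
  set w1 := x1%:R * mu true. set w2 := (n1 - x1)%:R * lam true.
  set w3 := x2%:R * mu false. set w4 := (n2 - x2)%:R * lam false.
  move=> E.
  have E' : w1 * (M - d1) + w2 * (M - d2) + w3 * (M - d3) + w4 * (M - d4) = 0.
    apply: (mulfI (lt0r_neq0 pp)); rewrite mulr0.
    transitivity (M * pi x1 x2 * (w2 + w1 + w4 + w3) -
       (pi x1 x2 * w1 * d1 + pi x1 x2 * w2 * d2 + pi x1 x2 * w3 * d3 + pi x1 x2 * w4 * d4));
      first ring.
    by rewrite E subrr.
  have wge : forall w, w = w1 \/ w = w2 \/ w = w3 \/ w = w4 -> 0 <= w.
    by move=> w [->|[->|[->|->]]]; apply: mulr_ge0; [exact: ler0n| exact: ltW (hm _)|exact: ler0n|exact: ltW (hl _)|exact: ler0n| exact: ltW (hm _)|exact: ler0n|exact: ltW (hl _)].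
  have dle1 : 0 <= M - d1 by rewrite subr_ge0 /d1; case: ifP => // h; apply: Hle => //; exact: leq_trans (leq_pred _) h1.
  have dle2 : 0 <= M - d2 by rewrite subr_ge0 /d2; case: ifP => // h; apply: Hle.
  have dle3 : 0 <= M - d3 by rewrite subr_ge0 /d3; case: ifP => // h; apply: Hle => //; exact: leq_trans (leq_pred _) h2.
  have dle4 : 0 <= M - d4 by rewrite subr_ge0 /d4; case: ifP => // h; apply: Hle.
  have [z1 z2 z3 z4] := sum4_0 (mulr_ge0 (wge w1 (or_introl erefl)) dle1)
     (mulr_ge0 (wge w2 (or_intror (or_introl erefl))) dle2)
     (mulr_ge0 (wge w3 (or_intror (or_intror (or_introl erefl)))) dle3)
     (mulr_ge0 (wge w4 (or_intror (or_intror (or_intror erefl)))) dle4) E'.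
  split=> h.
  - move: z1; rewrite /d1 h => /eqP; rewrite mulf_eq0 subr_eq0 => /orP[|/eqP<-//].
    by rewrite mulf_eq0 pnatr_eq0 (gt_eqF (hm true)) orbF => /eqP hx; rewrite hx in h.
  - move: z2; rewrite /d2 h => /eqP; rewrite mulf_eq0 subr_eq0 => /orP[|/eqP<-//].
    by rewrite mulf_eq0 pnatr_eq0 (gt_eqF (hl true)) orbF subn_eq0 leqNgt h.
  - move: z3; rewrite /d3 h => /eqP; rewrite mulf_eq0 subr_eq0 => /orP[|/eqP<-//].
    by rewrite mulf_eq0 pnatr_eq0 (gt_eqF (hm false)) orbF => /eqP hx; rewrite hx in h.
  - move: z4; rewrite /d4 h => /eqP; rewrite mulf_eq0 subr_eq0 => /orP[|/eqP<-//].
    by rewrite mulf_eq0 pnatr_eq0 (gt_eqF (hl false)) orbF subn_eq0 leqNgt h.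
have i1n : (i1 <= n1)%N by rewrite -ltnS.
have i2n : (i2 <= n2)%N by rewrite -ltnS.
have allM : forall x1 x2, (x1 <= n1)%N -> (x2 <= n2)%N -> D x1 x2 = M.
  have row : forall x1, (x1 <= n1)%N -> D x1 i2 = M.
    apply: (@prop1 (fun x => D x i2 = M) n1 i1) => // x hx hD.
    by have [s1 s2 _ _] := step x i2 hx i2n hD; split.
  move=> x1 x2 h1 h2.
  apply: (@prop1 (fun y => D x1 y = M) n2 i2) => //; first exact: row.
  by move=> y hy hD; have [_ _ s3 s4] := step x1 y h1 hy hD; split.
have PM : forall x1 x2, (x1 <= n1)%N -> (x2 <= n2)%N -> P x1 x2 = M * pi x1 x2.
  by move=> x1 x2 h1 h2; rewrite PD // allM.
have M1 : M = 1.
  rewrite -Hsum.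
  transitivity (M * ((\sum_(x1 < n1.+1) binpmf n1 a1 x1) * (\sum_(x2 < n2.+1) binpmf n2 a2 x2))).
    by rewrite !binpmf_sum !mulr1.
  rewrite mulr_suml mulr_sumr; apply: eq_bigr => i _.
  rewrite mulr_sumr mulr_sumr; apply: eq_bigr => j _.
  rewrite PM; [rewrite /pi; ring | by rewrite -ltnS | by rewrite -ltnS].
by move=> x1 x2 h1 h2; rewrite PM // M1 mul1r.
Qed.

Lemma sum_prod (R : realFieldType) (m n : nat) (f g : nat -> R) :
  \sum_(i < m) \sum_(j < n) f i * g j = (\sum_(i < m) f i) * (\sum_(j < n) g j).
Proof. by rewrite mulr_suml; apply: eq_bigr => i _; rewrite mulr_sumr. Qed.

Lemma sum2_split (R : realFieldType) (m n : nat) (A B : R) (f1 g1 f2 g2 : nat -> R) :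
  \sum_(i < m) \sum_(j < n) (A * (f1 i * g1 j) - B * (f2 i * g2 j))
  = A * ((\sum_(i < m) f1 i) * (\sum_(j < n) g1 j))
    - B * ((\sum_(i < m) f2 i) * (\sum_(j < n) g2 j)).
Proof.
rewrite -!sum_prod !mulr_sumr -sumrB; apply: eq_bigr => i _.
by rewrite !mulr_sumr -sumrB.
Qed.

Lemma tau_inv (R : realFieldType) (p : R) (x y : nat) : 0 < p -> p < 1 ->
  x%:R / tau p x y = x%:R * ((1 - p)^-1) ^+ x * ((1 - p)^-1) ^+ y * (1 - p) / p.
Proof.
move=> p0 p1; case: x => [|x]; first by rewrite !mul0r.
have q0 : 1 - p != 0 by rewrite subr_eq0 eq_sym lt_eqF.
have pn0 : p != 0 by rewrite gt_eqF.
rewrite /tau.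
have -> : ((x.+1 + y)%N%:Z - 1 = (x + y)%N%:Z :> int) by rewrite addSn -addn1 PoszD addrK.
change ((1 - p) ^ ((x + y)%N%:Z)) with ((1 - p) ^+ (x + y)).
rewrite exprS exprD !exprVn.
field.
by rewrite pn0 /= !expf_neq0.
Qed.

Lemma tauC (R : realFieldType) (p : R) (x y : nat) : tau p x y = tau p y x.
Proof. by rewrite /tau addnC. Qed.

Lemma Vk1_true (R : realFieldType) (alpha beta : bool -> R) (p dT : R) n1 n2 P (a1 a2 : R) :
  0 < p -> p < 1 -> (0 < n1)%N ->
  (forall x1 x2, (x1 <= n1)%N -> (x2 <= n2)%N -> P x1 x2 = binpmf n1 a1 x1 * binpmf n2 a2 x2) ->
  Vk1 alpha beta p dT true n1 n2 P
  = dT * a1 * (alpha true - beta true / p * (a1 * (1 - p)^-1 + (1 - a1)) ^+ n1.-1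
                 * (a2 * (1 - p)^-1 + (1 - a2)) ^+ n2).
Proof.
move=> p0 p1 n0 HP.
have q0 : 1 - p != 0 by rewrite subr_eq0 eq_sym lt_eqF.
have pn0 : p != 0 by rewrite gt_eqF.
have nn0 : (n1%:R : R) != 0 by rewrite pnatr_eq0 -lt0n.
set c := (1 - p)^-1.
rewrite /Vk1 /=.
transitivity (dT * \sum_(i < n1.+1) \sum_(j < n2.+1)
   ((alpha true / n1%:R) * ((binpmf n1 a1 i * i%:R * 1 ^+ i) * binpmf n2 a2 j)
    - (beta true * (1 - p) / p / n1%:R) * ((binpmf n1 a1 i * i%:R * c ^+ i) * (binpmf n2 a2 j * c ^+ j)))).
  congr (dT * _); apply: eq_bigr => i _; apply: eq_bigr => j _.
  rewrite HP; [rewrite /util|exact: ltn_ord i|exact: ltn_ord j].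
  transitivity (binpmf n1 a1 i * binpmf n2 a2 j * (alpha true / n1%:R * i%:R)
     - binpmf n1 a1 i * binpmf n2 a2 j * beta true / n1%:R * (i%:R / tau p i j)); first ring.
  rewrite tau_inv // expr1n; ring.
rewrite (sum2_split _ _ _ _ (fun i => binpmf n1 a1 i * i%:R * 1 ^+ i) (fun j => binpmf n2 a2 j)
  (fun i => binpmf n1 a1 i * i%:R * c ^+ i) (fun j => binpmf n2 a2 j * c ^+ j)).
rewrite !binpmf_gen1 binpmf_sum binpmf_gen.
have e1 : forall a : R, a * 1 + (1 - a) = 1 by move=> a; ring.
rewrite !e1 !expr1n.
rewrite /c; field; rewrite nn0 pn0 q0 //.
Qed.

Lemma Vk1_false (R : realFieldType) (alpha beta : bool -> R) (p dT : R) n1 n2 P (a1 a2 : R) :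
  0 < p -> p < 1 -> (0 < n2)%N ->
  (forall x1 x2, (x1 <= n1)%N -> (x2 <= n2)%N -> P x1 x2 = binpmf n1 a1 x1 * binpmf n2 a2 x2) ->
  Vk1 alpha beta p dT false n1 n2 P
  = dT * a2 * (alpha false - beta false / p * (a2 * (1 - p)^-1 + (1 - a2)) ^+ n2.-1
                 * (a1 * (1 - p)^-1 + (1 - a1)) ^+ n1).
Proof.
move=> p0 p1 n0 HP.
have q0 : 1 - p != 0 by rewrite subr_eq0 eq_sym lt_eqF.
have pn0 : p != 0 by rewrite gt_eqF.
have nn0 : (n2%:R : R) != 0 by rewrite pnatr_eq0 -lt0n.
set c := (1 - p)^-1.
rewrite /Vk1 /=.
transitivity (dT * \sum_(i < n1.+1) \sum_(j < n2.+1)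
   ((alpha false / n2%:R) * (binpmf n1 a1 i * (binpmf n2 a2 j * j%:R * 1 ^+ j))
    - (beta false * (1 - p) / p / n2%:R) * ((binpmf n1 a1 i * c ^+ i) * (binpmf n2 a2 j * j%:R * c ^+ j)))).
  congr (dT * _); apply: eq_bigr => i _; apply: eq_bigr => j _.
  rewrite HP; [rewrite /util|exact: ltn_ord i|exact: ltn_ord j].
  transitivity (binpmf n1 a1 i * binpmf n2 a2 j * (alpha false / n2%:R * j%:R)
     - binpmf n1 a1 i * binpmf n2 a2 j * beta false / n2%:R * (j%:R / tau p j i)); first by rewrite (tauC p i j); ring.
  rewrite tau_inv // expr1n; ring.
rewrite (sum2_split _ _ _ _ (fun i => binpmf n1 a1 i) (fun j => binpmf n2 a2 j * j%:R * 1 ^+ j)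
  (fun i => binpmf n1 a1 i * c ^+ i) (fun j => binpmf n2 a2 j * j%:R * c ^+ j)).
rewrite !binpmf_gen1 binpmf_sum binpmf_gen.
have e1 : forall a : R, a * 1 + (1 - a) = 1 by move=> a; ring.
rewrite !e1 !expr1n.
rewrite /c; field; rewrite nn0 pn0 q0 //.
Qed.

Lemma sum_shift (R : realFieldType) (m : nat) (F : nat -> R) :
  \sum_(i < m.+2) (if (0 < i)%N then F i.-1 else 0) = \sum_(i < m.+1) F i.
Proof. by rewrite big_ord_recl /= add0r. Qed.

Lemma xx_eq (R : realFieldType) (lam mu : bool -> R) (p : R) j q :
  p < 1 ->
  xx lam mu p j q = q * (aa lam mu j * (1 - p)^-1 + (1 - aa lam mu j)) + (1 - q).
Proof.
move=> p1; have q0 : 1 - p != 0 by rewrite subr_eq0 eq_sym lt_eqF.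
rewrite /xx; field; exact: q0.
Qed.

Unset Implicit Arguments.

Theorem lemma1 (R : realFieldType) (N : bool -> nat)
    (lam mu alpha beta : bool -> R) (p dT ps : R) (pi : bool -> R)
    (k : bool) (pi' : R) (SD : nat -> nat -> nat -> nat -> R)
    (B : nat -> nat -> R) :
  (forall j, 0 < lam j) -> (forall j, 0 < mu j) ->
  (forall j, 0 < alpha j) -> (forall j, 0 < beta j) ->
  0 < p -> p < 1 -> 0 < dT -> 0 <= ps ->
  (forall j, 0 <= pi j <= 1) -> 0 <= pi' <= 1 ->
  (0 < N k)%N ->
  (forall n1 n2, is_stationary lam mu n1 n2 (SD n1 n2)) ->
  Uk N alpha beta p dT pi k pi' SD
    = pi' * dT * aa lam mu k
      * (alpha k - beta k / p * (xx lam mu p k (pi k)) ^+ (N k).-1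
                   * (xx lam mu p (~~ k) (pi (~~ k))) ^+ N (~~ k))
  /\ Ck N pi k pi' ps B = pi' * ps.
Proof.
move=> hl hm ha hb p0 p1 dT0 ps0 hpi hpi' hN hSD.
split; last first.
  rewrite /Ck big1 ?addr0 // => i _; rewrite big1 // => j _; by rewrite mulr0 mul0r.
rewrite !xx_eq //.
set c := (1 - p)^-1.
set a1 := aa lam mu true. set a2 := aa lam mu false.
have HP := fun n1 n2 => stat_unique hl hm (hSD n1 n2).
case: k hN => /= hN; rewrite /Uk /=.
- case E : (N true) hN => [|m] // _.
  set y1 := a1 * c + (1 - a1). set y2 := a2 * c + (1 - a2).
  transitivity (pi' * \sum_(i < m.+2) \sum_(j < (N false).+1)
     ((dT * a1 * alpha true) * ((if (0 < i)%N then binpmf m (pi true) i.-1 else 0)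
                               * binpmf (N false) (pi false) j)
      - (dT * a1 * beta true / p) * ((if (0 < i)%N then binpmf m (pi true) i.-1 * y1 ^+ i.-1 else 0)
                               * (binpmf (N false) (pi false) j * y2 ^+ j)))).
    congr (pi' * _); apply: eq_bigr => i _; rewrite big_mkcond; apply: eq_bigr => j _ /=.
    case: i => [[|i] hi] /=; first by rewrite !(mul0r, mulr0) subr0.
    rewrite /prob_cond /= E /= (@Vk1_true R alpha beta p dT i.+1 j (SD i.+1 j) _ _ p0 p1 erefl (HP _ _)).
    rewrite -/a1 -/a2 -/c -/y1 -/y2; ring.
  rewrite (sum2_split _ _ _ _ (fun i => if (0 < i)%N then binpmf m (pi true) i.-1 else 0)
    (fun j => binpmf (N false) (pi false) j)
    (fun i => if (0 < i)%N then binpmf m (pi true) i.-1 * y1 ^+ i.-1 else 0)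
    (fun j => binpmf (N false) (pi false) j * y2 ^+ j)).
  rewrite (sum_shift m (fun k => binpmf m (pi true) k))
          (sum_shift m (fun k => binpmf m (pi true) k * y1 ^+ k)).
  rewrite !binpmf_sum !binpmf_gen /=; rewrite /a1 /a2; ring.
- case E : (N false) hN => [|m] // _.
  set y1 := a1 * c + (1 - a1). set y2 := a2 * c + (1 - a2).
  transitivity (pi' * \sum_(i < (N true).+1) \sum_(j < m.+2)
     ((dT * a2 * alpha false) * (binpmf (N true) (pi true) i
                               * (if (0 < j)%N then binpmf m (pi false) j.-1 else 0))
      - (dT * a2 * beta false / p) * ((binpmf (N true) (pi true) i * y1 ^+ i)
                               * (if (0 < j)%N then binpmf m (pi false) j.-1 * y2 ^+ j.-1 else 0)))).
    congr (pi' * _); apply: eq_bigr => i _; rewrite big_mkcond; apply: eq_bigr => j _ /=.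
    case: j => [[|j] hj] /=; first by rewrite !(mul0r, mulr0) subr0.
    rewrite /prob_cond /= E /= (@Vk1_false R alpha beta p dT i j.+1 (SD i j.+1) _ _ p0 p1 erefl (HP _ _)).
    rewrite -/a1 -/a2 -/c -/y1 -/y2; ring.
  rewrite (sum2_split _ _ _ _ (fun i => binpmf (N true) (pi true) i)
    (fun j => if (0 < j)%N then binpmf m (pi false) j.-1 else 0)
    (fun i => binpmf (N true) (pi true) i * y1 ^+ i)
    (fun j => if (0 < j)%N then binpmf m (pi false) j.-1 * y2 ^+ j.-1 else 0)).
  rewrite (sum_shift m (fun k => binpmf m (pi false) k))
          (sum_shift m (fun k => binpmf m (pi false) k * y2 ^+ k)).
  rewrite !binpmf_sum !binpmf_gen /=; rewrite /a1 /a2; ring.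
Qed.
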